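(* Let $(\Omega=\mathcal{A}\otimes\bigwedge(\mathbb{C}^2),\mathrm{d},\bar{\mathrm{d}})$ be a bidifferential graded algebra with $\mathcal{A}=\mathrm{Mat}_{n_0}(\mathcal{B})$, $\mathcal{B}$ a unital complex algebra, $n_0\in\mathbb{N}$, and $\mathrm{d},\bar{\mathrm{d}}$ respecting matrix sizes. Let $n,m\ge n_0$ and let $\mathbf{P},\hat{\mathbf{K}}\in\mathrm{Mat}(n,n,\mathcal{B})$, $\mathbf{V}\in\mathrm{Mat}(n,m,\mathcal{B})$, $\hat{\mathbf{U}}\in\mathrm{Mat}(m,n,\mathcal{B})$ be $\mathrm{d}$- and $\bar{\mathrm{d}}$-constant. Let $\hat{\mathbf{\Xi}}\in\mathrm{Mat}(n,n,\mathcal{B})$ satisfy $$\bar{\mathrm{d}}\hat{\mathbf{\Xi}}=(\mathrm{d}\hat{\mathbf{\Xi}})\,\mathbf{P}\qquad\text{and}\qquad [\mathbf{P},\hat{\mathbf{K}}\hat{\mathbf{\Xi}}]=\mathbf{V}\hat{\mathbf{U}}\hat{\mathbf{\Xi}}.$$ If $\mathbf{I}-\hat{\mathbf{K}}\hat{\mathbf{\Xi}}$ is invertible, then $\phi=\hat{\mathbf{U}}\,\hat{\mathbf{\Xi}}\,(\mathbf{I}-\hat{\mathbf{K}}\hat{\mathbf{\Xi}})^{-1}\mathbf{V}$ solves $\bar{\mathrm{d}}\mathrm{d}\phi=\mathrm{d}\phi\,\mathrm{d}\phi$.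
   Context: A bidifferential graded algebra is a graded algebra $\Omega=\bigoplus_{r\ge0}\Omega^r$ with two degree-one linear maps $\mathrm{d},\bar{\mathrm{d}}$ satisfying $\mathrm{d}^2=\bar{\mathrm{d}}^2=\mathrm{d}\bar{\mathrm{d}}+\bar{\mathrm{d}}\mathrm{d}=0$ and the graded Leibniz rule. $\mathrm{Mat}_{n_0}(\mathcal{B}):=\bigoplus_{n',n\ge n_0}\mathrm{Mat}(n',n,\mathcal{B})$ with the matrix product extended by zero for non-matching sizes; elements of $\bigwedge(\mathbb{C}^2)$ are constants; ''respecting matrix sizes'' means $\mathrm{d},\bar{\mathrm{d}}$ map $\mathrm{Mat}(n',n,\mathcal{B})\otimes\bigwedge(\mathbb{C}^2)$ into itself. $\mathrm{d}$- and $\bar{\mathrm{d}}$-constant means annihilated by both maps. $\mathbf{I}=I_n$. *)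

(* Defs.v *)
From HB Require Import structures.
From mathcomp Require Import all_boot all_order all_algebra.
Set Implicit Arguments. Unset Strict Implicit. Unset Printing Implicit Defensive.
Import Order.TTheory GRing.Theory.
Local Open Scope ring_scope.

(* An element of  Mat(p,q,B) (x) /\(F^2)  is written uniquely as
     x0 + x1 xi1 + x2 xi2 + x12 xi1 xi2
   with x0,x1,x2,x12 in Mat(p,q,B); the generators xi1, xi2 of the exterior
   algebra commute with B-matrices and anticommute with each other. *)
Section ExtAlg.
Variables (F : fieldType) (B : algType F).

Record ext (p q : nat) := Ext {
  e0 : 'M[B]_(p, q); e1 : 'M[B]_(p, q); e2 : 'M[B]_(p, q); e12 : 'M[B]_(p, q) }.

Definition ezero p q : ext p q := Ext 0 0 0 0.
Definition eadd p q (x y : ext p q) : ext p q :=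
  Ext (e0 x + e0 y) (e1 x + e1 y) (e2 x + e2 y) (e12 x + e12 y).
Definition eopp p q (x : ext p q) : ext p q :=
  Ext (- e0 x) (- e1 x) (- e2 x) (- e12 x).
Definition mscale p q (c : F) (A : 'M[B]_(p, q)) : 'M[B]_(p, q) :=
  map_mx (fun b => c *: b) A.
Definition escale p q (c : F) (x : ext p q) : ext p q :=
  Ext (mscale c (e0 x)) (mscale c (e1 x)) (mscale c (e2 x)) (mscale c (e12 x)).

(* product of Mat(p,q) (x) /\ by Mat(q,r) (x) /\ ; xi2 xi1 = - xi1 xi2 *)
Definition emul p q r (x : ext p q) (y : ext q r) : ext p r :=
  Ext (e0 x *m e0 y)
      (e0 x *m e1 y + e1 x *m e0 y)
      (e0 x *m e2 y + e2 x *m e0 y)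
      (e0 x *m e12 y + e12 x *m e0 y + e1 x *m e2 y - e2 x *m e1 y).

Definition emb p q (a : 'M[B]_(p, q)) : ext p q := Ext a 0 0 0.

(* right multiplication by the generators xi1, xi2 *)
Definition exi1 p q (x : ext p q) : ext p q := Ext 0 (e0 x) 0 (- e2 x).
Definition exi2 p q (x : ext p q) : ext p q := Ext 0 0 (e0 x) (e1 x).

Definition ehom (r : nat) p q (x : ext p q) : Prop :=
  match r with
  | 0 => [/\ e1 x = 0, e2 x = 0 & e12 x = 0]
  | 1 => e0 x = 0 /\ e12 x = 0
  | 2 => [/\ e0 x = 0, e1 x = 0 & e2 x = 0]
  | _ => x = ezero p q
  end.

Definition esign (r : nat) p q (x : ext p q) : ext p q :=
  if odd r then eopp x else x.

(* A map D, defined on every block Mat(p,q,B) (x) /\ (so it respects matrix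
   sizes), which is a differential of the graded algebra Mat_{n0}(B) (x) /\:
   F-linear, of degree one, squaring to zero, satisfying the graded Leibniz
   rule, and annihilating the elements of /\(F^2) (i.e. it commutes with
   right multiplication by xi1, xi2). *)
Definition is_differential (n0 : nat) (D : forall p q, ext p q -> ext p q) : Prop :=
  ((forall p q (x y : ext p q), (n0 <= p)%N -> (n0 <= q)%N ->
         D p q (eadd x y) = eadd (D p q x) (D p q y)) /\
      (forall p q (c : F) (x : ext p q), (n0 <= p)%N -> (n0 <= q)%N ->
         D p q (escale c x) = escale c (D p q x)) /\
      (forall r p q (x : ext p q), (n0 <= p)%N -> (n0 <= q)%N ->
         ehom r x -> ehom r.+1 (D p q x)) /\
      (forall p q (x : ext p q), (n0 <= p)%N -> (n0 <= q)%N ->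
         D p q (D p q x) = ezero p q) /\
      (forall r p q s (x : ext p q) (y : ext q s),
         (n0 <= p)%N -> (n0 <= q)%N -> (n0 <= s)%N -> ehom r x ->
         D p s (emul x y) = eadd (emul (D p q x) y) (esign r (emul x (D q s y)))) /\
      (forall p q (x : ext p q), (n0 <= p)%N -> (n0 <= q)%N ->
         D p q (exi1 x) = exi1 (D p q x) /\ D p q (exi2 x) = exi2 (D p q x))).

Definition bidifferential (n0 : nat) (d db : forall p q, ext p q -> ext p q) : Prop :=
  [/\ is_differential n0 d, is_differential n0 db &
      forall p q (x : ext p q), (n0 <= p)%N -> (n0 <= q)%N ->
        eadd (d p q (db p q x)) (db p q (d p q x)) = ezero p q].

Definition dconst (d db : forall p q, ext p q -> ext p q) p q (a : 'M[B]_(p, q)) : Prop :=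
  d p q (emb a) = ezero p q /\ db p q (emb a) = ezero p q.

End ExtAlg.

(* Main.v *)
Require Import Defs.
From HB Require Import structures.
From mathcomp Require Import all_boot all_order all_algebra.
Set Implicit Arguments. Unset Strict Implicit. Unset Printing Implicit Defensive.
Import GRing.Theory.
Local Open Scope ring_scope.

Section ExtLemmas.
Variables (F : fieldType) (B : algType F) (n0 : nat).

Lemma ext_eq p q (x y : ext B p q) : e0 x = e0 y -> e1 x = e1 y -> e2 x = e2 y ->
  e12 x = e12 y -> x = y.
Proof. by case: x; case: y => /= ? ? ? ? ? ? ? ? -> -> -> ->. Qed.

Definition c1 (D : forall p q, ext B p q -> ext B p q) p q (A : 'M[B]_(p, q)) := e1 (D p q (emb A)).
Definition c2 (D : forall p q, ext B p q -> ext B p q) p q (A : 'M[B]_(p, q)) := e2 (D p q (emb A)).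

Variable D : forall p q, ext B p q -> ext B p q.
Hypothesis HD : is_differential n0 D.

Lemma D_form p q (A : 'M[B]_(p, q)) : (n0 <= p)%N -> (n0 <= q)%N ->
  D (emb A) = Ext 0 (c1 D A) (c2 D A) 0.
Proof.
move=> hp hq; case: HD => _ [_ [Hdeg _]].
have [h0 h12] : e0 (D (emb A)) = 0 /\ e12 (D (emb A)) = 0.
  by apply: (Hdeg 0%N) => //.
by apply: ext_eq.
Qed.

Lemma c_add p q (A C : 'M[B]_(p, q)) : (n0 <= p)%N -> (n0 <= q)%N ->
  c1 D (A + C) = c1 D A + c1 D C /\ c2 D (A + C) = c2 D A + c2 D C.
Proof.
move=> hp hq; case: HD => Hadd _; rewrite /c1 /c2.
have -> : emb (A + C) = eadd (emb A) (emb C) by apply: ext_eq; rewrite /= ?addr0.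
by rewrite Hadd.
Qed.

Lemma c_mul p q s (A : 'M[B]_(p, q)) (C : 'M[B]_(q, s)) :
  (n0 <= p)%N -> (n0 <= q)%N -> (n0 <= s)%N ->
  c1 D (A *m C) = c1 D A *m C + A *m c1 D C /\ c2 D (A *m C) = c2 D A *m C + A *m c2 D C.
Proof.
move=> hp hq hs; case: HD => _ [_ [_ [_ [Hl _]]]]; rewrite /c1 /c2.
have -> : emb (A *m C) = emul (emb A) (emb C).
  by apply: ext_eq; rewrite /= ?mulmx0 ?mul0mx ?addr0 ?subr0.
rewrite (Hl 0%N) //.
rewrite /esign /= !D_form //=.
by rewrite ?mulmx0 ?mul0mx ?addr0 ?add0r.
Qed.

Lemma D_form2 p q (A : 'M[B]_(p, q)) : (n0 <= p)%N -> (n0 <= q)%N ->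
  D (emb A) = eadd (exi1 (emb (c1 D A))) (exi2 (emb (c2 D A))).
Proof.
move=> hp hq; rewrite D_form //; apply: ext_eq; by rewrite /= ?addr0 ?add0r ?oppr0.
Qed.

End ExtLemmas.
Section ExtLemmas2.
Variables (F : fieldType) (B : algType F) (n0 : nat).
Variable D : forall p q, ext B p q -> ext B p q.
Hypothesis HD : is_differential n0 D.
Variable D' : forall p q, ext B p q -> ext B p q.
Hypothesis HD' : is_differential n0 D'.

Lemma DD p q (A : 'M[B]_(p, q)) : (n0 <= p)%N -> (n0 <= q)%N ->
  D' (D (emb A)) = Ext 0 0 0 (c1 D' (c2 D A) - c2 D' (c1 D A)).
Proof.
move=> hp hq; rewrite (D_form2 HD) //.
case: HD' => Hadd [_ [_ [_ [_ Hxi]]]].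
rewrite Hadd //.
have [-> _] := Hxi _ _ (emb (c1 D A)) hp hq.
have [_ ->] := Hxi _ _ (emb (c2 D A)) hp hq.
rewrite !(D_form HD') //.
apply: ext_eq; rewrite /= ?addr0 ?add0r ?oppr0 //.
by rewrite addrC.
Qed.
End ExtLemmas2.

Section Alg.
Variables (F : fieldType) (B : algType F) (n0 : nat).
Variable dl : forall p q, 'M[B]_(p, q) -> 'M[B]_(p, q).
Hypothesis Hadd : forall p q (A C : 'M[B]_(p, q)), (n0 <= p)%N -> (n0 <= q)%N ->
  dl (A + C) = dl A + dl C.
Hypothesis Hmul : forall p q s (A : 'M[B]_(p, q)) (C : 'M[B]_(q, s)),
  (n0 <= p)%N -> (n0 <= q)%N -> (n0 <= s)%N -> dl (A *m C) = dl A *m C + A *m dl C.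
Variables (n m : nat) (Hn : (n0 <= n)%N) (Hm : (n0 <= m)%N).
Variables (P K X M : 'M[B]_n) (V : 'M[B]_(n, m)) (U : 'M[B]_(m, n)).
Hypotheses (HP : dl P = 0) (HK : dl K = 0) (HV : dl V = 0) (HU : dl U = 0).
Hypothesis Hcomm : P *m (K *m X) - (K *m X) *m P = V *m U *m X.
Hypothesis Hinv1 : (1%:M - K *m X) *m M = 1%:M.
Hypothesis Hinv2 : M *m (1%:M - K *m X) = 1%:M.

Lemma dl0 p q : (n0 <= p)%N -> (n0 <= q)%N -> dl (0 : 'M[B]_(p, q)) = 0.
Proof.
move=> hp hq; have := Hadd (0 : 'M[B]_(p, q)) 0 hp hq.
rewrite addr0 => h; apply: (@addrI _ (dl (0 : 'M[B]_(p, q)))).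
by rewrite addr0 -h.
Qed.

Lemma dlN p q (A : 'M[B]_(p, q)) : (n0 <= p)%N -> (n0 <= q)%N -> dl (- A) = - dl A.
Proof.
move=> hp hq; have := Hadd A (- A) hp hq.
rewrite subrr dl0 // => /eqP; rewrite eq_sym addr_eq0 => /eqP ->. by rewrite opprK.
Qed.

Lemma dlB p q (A C : 'M[B]_(p, q)) : (n0 <= p)%N -> (n0 <= q)%N -> dl (A - C) = dl A - dl C.
Proof. by move=> hp hq; rewrite Hadd // dlN. Qed.

Lemma dl1 : dl (1%:M : 'M[B]_n) = 0.
Proof.
have := Hmul (1%:M : 'M[B]_n) 1%:M Hn Hn Hn.
rewrite !mulmx1 !mul1mx => h; apply: (@addrI _ (dl (1%:M : 'M[B]_n))).
by rewrite addr0 -h.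
Qed.

Lemma dlM : dl M = M *m K *m dl X *m M.
Proof.
have h : dl M *m (1%:M - K *m X) = M *m K *m dl X.
  have := congr1 (@dl n n) Hinv2.
  rewrite Hmul // dlB // dl1 Hmul // HK mul0mx !add0r mulmxN => /eqP.
  by rewrite subr_eq0 mulmxA => /eqP.
by rewrite -[dl M]mulmx1 -Hinv1 mulmxA h.
Qed.

Definition NN := 1%:M + X *m M *m K.

Lemma dlXM : dl (X *m M) = NN *m dl X *m M.
Proof.
rewrite Hmul // dlM /NN mulmxDl mul1mx.
by rewrite mulmxDl !mulmxA.
Qed.

Lemma dlphi : dl (U *m X *m M *m V) = U *m (NN *m dl X *m M) *m V.
Proof.
rewrite Hmul // HV mulmx0 addr0 -mulmxA Hmul // HU mul0mx add0r dlXM.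
by [].
Qed.

Lemma dlcomm : P *m (K *m dl X) - (K *m dl X) *m P = V *m U *m dl X.
Proof.
have := congr1 (@dl n n) Hcomm.
by rewrite dlB // !Hmul // HP HK HV HU !(mul0mx, mulmx0, add0r, addr0).
Qed.

Lemma dlNN : dl NN = NN *m dl X *m M *m K.
Proof.
by rewrite /NN Hadd // dl1 add0r Hmul // HK mulmx0 addr0 dlXM.
Qed.

Lemma dlsecond (e : 'M[B]_n) : dl (U *m (NN *m e *m M) *m V) =
  U *m (NN *m dl X *m M *m K *m e *m M + NN *m dl e *m M
        + NN *m e *m (M *m K *m dl X *m M)) *m V.
Proof.
rewrite Hmul // HV mulmx0 addr0 Hmul // HU mul0mx add0r.
by rewrite !Hmul // dlNN dlM mulmxDl.
Qed.

Lemma PMrel : P *m M = M *m P + M *m V *m U *m X *m M.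
Proof.
have h1 : P *m (1%:M - K *m X) - (1%:M - K *m X) *m P = - (V *m U *m X).
  by rewrite mulmxBr mulmxBl mulmx1 mul1mx -Hcomm !opprB addrC addrA subrK.
have h2 : M *m (P *m (1%:M - K *m X) - (1%:M - K *m X) *m P) *m M = M *m P - P *m M.
  by rewrite mulmxBr mulmxBl !mulmxA -[M *m P *m _ *m M]mulmxA Hinv1 mulmx1 Hinv2 mul1mx.
rewrite h1 mulmxN mulNmx !mulmxA in h2.
move/eqP: h2; rewrite eq_sym subr_eq => /eqP ->.
by rewrite addrC addNKr.
Qed.

Lemma core (b : 'M[B]_n) : P *m (K *m b) - (K *m b) *m P = V *m U *m b ->
  P *m M *m K *m b = M *m K *m b *m P + M *m V *m U *m NN *m b.
Proof.
move=> /eqP; rewrite subr_eq => /eqP hb.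
rewrite PMrel !mulmxDl -!mulmxA hb /NN !mulmxDl mul1mx !mulmxDr -!mulmxA.
by rewrite addrAC addrC.
Qed.

Lemma Qlem (a b : 'M[B]_n) : P *m (K *m b) - (K *m b) *m P = V *m U *m b ->
  NN *m a *m P *m M *m K *m b *m M - NN *m a *m M *m K *m b *m P *m M
  = NN *m a *m M *m V *m U *m NN *m b *m M.
Proof.
move=> /core h.
have : NN *m a *m (P *m M *m K *m b) *m M - NN *m a *m (M *m K *m b *m P) *m M
  = NN *m a *m (M *m V *m U *m NN *m b) *m M.
  by rewrite h mulmxDr mulmxDl addrC addKr.
by rewrite !mulmxA.
Qed.
End Alg.

Lemma combo (V : zmodType) (t1 t2 t3 s1 s3 : V) :
  (t1 + t2 + t3) - (s1 + t2 + s3) = (t3 - s1) - (s3 - t1).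
Proof.
rewrite !opprD !opprK !addrA (addrAC (t1 + t2 + t3) (- s1) (- t2)) (addrAC (t1 + t2) t3 (- t2)) addrK.
by rewrite [RHS]addrC !addrA.
Qed.

Theorem corollary2p4 (F : fieldType) (B : algType F) (n0 : nat)
    (d db : forall p q, ext B p q -> ext B p q)
    (Hbidiff : bidifferential n0 d db)
    (n m : nat) (Hn : (n0 <= n)%N) (Hm : (n0 <= m)%N)
    (P K Xi : 'M[B]_n) (V : 'M[B]_(n, m)) (U : 'M[B]_(m, n))
    (HP : dconst d db P) (HK : dconst d db K)
    (HV : dconst d db V) (HU : dconst d db U)
    (HXi : db n n (emb Xi) = emul (d n n (emb Xi)) (emb P))
    (Hcomm : P *m (K *m Xi) - (K *m Xi) *m P = V *m U *m Xi)
    (Minv : 'M[B]_n)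
    (Hinv1 : (1%:M - K *m Xi) *m Minv = 1%:M)
    (Hinv2 : Minv *m (1%:M - K *m Xi) = 1%:M) :
  let phi := U *m Xi *m Minv *m V in
  db m m (d m m (emb phi)) = emul (d m m (emb phi)) (d m m (emb phi)).
Proof.
move=> phi.
case: Hbidiff => Hd Hdb Hcross.
have add1 : forall D, is_differential n0 D -> forall p q (A C : 'M[B]_(p, q)),
  (n0 <= p)%N -> (n0 <= q)%N -> c1 D (A + C) = c1 D A + c1 D C.
  by move=> D HD p q A C hp hq; case: (c_add HD A C hp hq).
have add2 : forall D, is_differential n0 D -> forall p q (A C : 'M[B]_(p, q)),
  (n0 <= p)%N -> (n0 <= q)%N -> c2 D (A + C) = c2 D A + c2 D C.
  by move=> D HD p q A C hp hq; case: (c_add HD A C hp hq).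
have mul1 : forall D, is_differential n0 D -> forall p q s (A : 'M[B]_(p, q)) (C : 'M[B]_(q, s)),
  (n0 <= p)%N -> (n0 <= q)%N -> (n0 <= s)%N -> c1 D (A *m C) = c1 D A *m C + A *m c1 D C.
  by move=> D HD p q s A C hp hq hs; case: (c_mul HD A C hp hq hs).
have mul2 : forall D, is_differential n0 D -> forall p q s (A : 'M[B]_(p, q)) (C : 'M[B]_(q, s)),
  (n0 <= p)%N -> (n0 <= q)%N -> (n0 <= s)%N -> c2 D (A *m C) = c2 D A *m C + A *m c2 D C.
  by move=> D HD p q s A C hp hq hs; case: (c_mul HD A C hp hq hs).
have cst : forall D p q (A : 'M[B]_(p, q)), D p q (emb A) = ezero B p q ->
    c1 D A = 0 /\ c2 D A = 0.
  by move=> D p q A h; rewrite /c1 /c2 h.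
case: HP => /cst [dP1 dP2] /cst [bP1 bP2].
case: HK => /cst [dK1 dK2] /cst [bK1 bK2].
case: HV => /cst [dV1 dV2] /cst [bV1 bV2].
case: HU => /cst [dU1 dU2] /cst [bU1 bU2].
have hX1 : c1 db Xi = c1 d Xi *m P.
  have := congr1 (@e1 _ _ _ _) HXi; rewrite (D_form Hd) //= mul0mx add0r.
  by [].
have hX2 : c2 db Xi = c2 d Xi *m P.
  have := congr1 (@e2 _ _ _ _) HXi; rewrite (D_form Hd) //= mul0mx add0r.
  by [].
have dd : c1 d (c2 d Xi) = c2 d (c1 d Xi).
  have [_ [_ [_ [Hdd _]]]] := Hd.
  have := congr1 (@e12 _ _ _ _) (Hdd _ _ (emb Xi) Hn Hn).
  rewrite (DD Hd Hd) //= => /eqP; rewrite subr_eq0 => /eqP.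
  by [].
have cr := congr1 (@e12 _ _ _ _) (Hcross _ _ (emb phi) Hm Hm).
rewrite /= (DD Hdb Hd) // (DD Hd Hdb) //= in cr.
rewrite (DD Hd Hdb) // (D_form Hd) //.
apply: ext_eq; rewrite /= ?(mul0mx, mulmx0, addr0, add0r) //.
move/eqP: cr; rewrite addrC addr_eq0 => /eqP ->; rewrite opprB.
have ph := dlphi (add1 _ Hd) (mul1 _ Hd) Hn Hm dK1 dV1 dU1 Hinv1 Hinv2.
have ph2 := dlphi (add2 _ Hd) (mul2 _ Hd) Hn Hm dK2 dV2 dU2 Hinv1 Hinv2.
have pb := dlphi (add1 _ Hdb) (mul1 _ Hdb) Hn Hm bK1 bV1 bU1 Hinv1 Hinv2.
have pb2 := dlphi (add2 _ Hdb) (mul2 _ Hdb) Hn Hm bK2 bV2 bU2 Hinv1 Hinv2.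
have s1 := dlsecond (add1 _ Hd) (mul1 _ Hd) Hn Hm dK1 dV1 dU1 Hinv1 Hinv2.
have s2 := dlsecond (add2 _ Hd) (mul2 _ Hd) Hn Hm dK2 dV2 dU2 Hinv1 Hinv2.
rewrite /phi ph ph2 pb pb2 hX1 hX2 s1 s2.
rewrite !mul1 // !mul2 // dP1 dP2 !mulmx0 !addr0 dd.
have q1 := dlcomm (add1 _ Hd) (mul1 _ Hd) Hn Hm dP1 dK1 dV1 dU1 Hcomm.
have q2 := dlcomm (add2 _ Hd) (mul2 _ Hd) Hn Hm dP2 dK2 dV2 dU2 Hcomm.
have Q12 := Qlem Hcomm Hinv1 Hinv2 (c1 d Xi) q2.
have Q21 := Qlem Hcomm Hinv1 Hinv2 (c2 d Xi) q1.
rewrite -mulmxBl -mulmxBr !mulmxA combo Q12 Q21.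
by rewrite mulmxBr mulmxBl !mulmxA.
Qed.
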